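(* Let $0<a<1$ and let $(\mathbf X_j)$ be the persistent random walk on $\mathbb Z$ with persistence parameter $a$ started at $0$; let $\mathbf L:=\inf\{j\ge1:\mathbf X_j=0\}$ and $\mathbf R,\mathbf V$ the numbers of runs and short runs of the excursion path $\mathbf X_0,\dots,\mathbf X_{\mathbf L}$. Let $K:=E\{r^{\mathbf R}y^{\mathbf V}z^{\mathbf L}\}$ and $\alpha_a:=\sqrt{\beta_a^2-4x_a}$, the square root taken as the formal power series in $z$ (with coefficients polynomial in $r,y$) having value $1$ at $z=0$. Then $$K=\frac{1-\frac12\beta_a-\frac12\alpha_a}{1-a},$$ and $K=\lim_{N\to\infty}E\{r^{\mathbf R}y^{\mathbf V}z^{\mathbf L}\mid \mathbf H\le N\}$, where $\mathbf H:=\max_{1\le j\le\mathbf L}|\mathbf X_j|$.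
   Context: Persistent random walk with parameter $a$: increments $\varepsilon_j\in\{\pm1\}$, $P(\varepsilon_1=\pm1)=\frac12$, and for $j\ge1$ the next increment equals the previous one with probability $a$ and is reversed with probability $1-a$. A run is a maximal block of consecutive steps all $+1$ or all $-1$; a short run is a run of one step. $\tau_a:=1+(1-a)^2r^2z^2y(1-y)$, $x_a:=a^2z^2\tau_a^2$, $\beta_a:=1+z^2\big(a^2-(1-a)^2r^2(y^2+a^2(1-y)^2z^2)\big)$. The limit is coefficientwise in the power series in $z$. *)

(* Defs.v *)
From HB Require Import structures.
From mathcomp Require Import all_boot all_order all_algebra.
From mathcomp Require Import all_classical all_reals all_analysis.
Set Implicit Arguments. Unset Strict Implicit. Unset Printing Implicit Defensive.
Import Order.TTheory GRing.Theory Num.Theory.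
Local Open Scope ring_scope.

Definition step (b : bool) : int := if b then 1 else -1.

Definition pos (e : seq bool) (j : nat) : int :=
  \sum_(i < j) step (nth false e i).

(* Probability that the first size e increments equal e, for the
   persistent random walk with parameter a:  P(eps_1 = +-1) = 1/2,
   eps_{j+1} = eps_j with prob a, reversed with prob 1 - a. *)
Definition pathprob {R : realType} (a : R) (e : seq bool) : R :=
  2^-1 * \prod_(1 <= i < size e)
           (if nth false e i == nth false e i.-1 then a else 1 - a).

(* e is exactly the excursion up to L = inf{j >= 1 : X_j = 0}, L = size e. *)
Definition excursion (e : seq bool) : bool :=
  (0 < size e)%N && (pos e (size e) == 0)
  && [forall j : 'I_(size e), (0 < j)%N ==> (pos e j != 0)].

(* Number of runs (maximal blocks of equal steps) = number of run starts. *)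
Definition nruns (e : seq bool) : nat :=
  #|[set i : 'I_(size e) | (i == 0 :> nat) || (nth false e i != nth false e i.-1)]|.

(* Number of short runs (runs consisting of one step). *)
Definition nshort (e : seq bool) : nat :=
  #|[set i : 'I_(size e) |
      ((i == 0 :> nat) || (nth false e i != nth false e i.-1))
      && ((i.+1 == size e) || (nth false e i.+1 != nth false e i))]|.

Definition heightle (e : seq bool) (N : nat) : bool :=
  [forall j : 'I_(size e).+1, (0 < j)%N ==> (absz (pos e j) <= N)%N].

(* Coefficient of z^n in K = E{ r^R y^V z^L }. *)
Definition Kcoef {R : realType} (a r y : R) (n : nat) : R :=
  \sum_(e : n.-tuple bool | excursion e)
     pathprob a e * r ^+ nruns e * y ^+ nshort e.

(* Coefficient of z^n in E{ r^R y^V z^L ; H <= N } (not yet normalized). *)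
Definition KHcoef {R : realType} (a r y : R) (N n : nat) : R :=
  \sum_(e : n.-tuple bool | excursion e && heightle e N)
     pathprob a e * r ^+ nruns e * y ^+ nshort e.

Definition pLH {R : realType} (a : R) (N n : nat) : R :=
  \sum_(e : n.-tuple bool | excursion e && heightle e N) pathprob a e.

(* P(H <= N) = sum_n P(L = n, H <= N)   (L < oo a.s.) *)
Definition pH {R : realType} (a : R) (N : nat) : R :=
  limn (fun m => \sum_(n < m) pLH a N n).

Definition tau_a {R : realType} (a r y : R) : {poly R} :=
  1 + ((1 - a) ^+ 2 * r ^+ 2 * y * (1 - y))%:P * 'X ^+ 2.
Definition x_a {R : realType} (a r y : R) : {poly R} :=
  (a ^+ 2)%:P * 'X ^+ 2 * (tau_a a r y) ^+ 2.
Definition beta_a {R : realType} (a r y : R) : {poly R} :=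
  1 + 'X ^+ 2 * ((a ^+ 2)%:P - ((1 - a) ^+ 2 * r ^+ 2)%:P
                 * ((y ^+ 2)%:P + (a ^+ 2 * (1 - y) ^+ 2)%:P * 'X ^+ 2)).
Definition disc_a {R : realType} (a r y : R) : {poly R} :=
  (beta_a a r y) ^+ 2 - 4%:R *: x_a a r y.

Definition fps_mul {R : realType} (f g : nat -> R) (n : nat) : R :=
  \sum_(i < n.+1) f i * g (n - i)%N.

(* Main.v *)
Require Import Defs.
From HB Require Import structures.
From mathcomp Require Import all_boot all_order all_algebra.
From mathcomp Require Import all_classical all_reals all_analysis.
Import Order.TTheory GRing.Theory Num.Theory numFieldNormedType.Exports.
Local Open Scope classical_set_scope.
Local Open Scope ring_scope.

From mathcomp Require Import ring lra.
Local Close Scope classical_set_scope.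
Set Implicit Arguments. Unset Strict Implicit. Unset Printing Implicit Defensive.

Lemma card_set_sum n (P : 'I_n -> bool) :
  #|[set i : 'I_n | P i]| = (\sum_(i < n) (P i : nat))%N.
Proof.
rewrite -sum1_card big_mkcond /=; apply: eq_bigr => i _; rewrite inE.
by case: (P i).
Qed.

Definition nch (b : bool) (e : seq bool) : nat :=
  (\sum_(i < size e) (nth false e i != nth false (b :: e) i))%N.

Lemma nch_nil b : nch b [::] = 0%N.
Proof. by rewrite /nch big_ord0. Qed.

Lemma nch_cons b c e : nch b (c :: e) = ((c != b) + nch c e)%N.
Proof. by rewrite /nch /= big_ord_recl /=. Qed.

Lemma nruns_cons b e : nruns (b :: e) = (nch b e).+1.
Proof.
by rewrite /nruns card_set_sum /= big_ord_recl /=.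
Qed.

Definition sh (s : bool) (b : bool) (e : seq bool) : nat :=
  (\sum_(i < (size e).+1)
    ((if i == 0%N :> nat then s else nth false (b :: e) i != nth false (b :: e) i.-1)
     && ((i.+1 == (size e).+1) || (nth false (b :: e) i.+1 != nth false (b :: e) i))))%N.

Lemma nshort_sh b e : nshort (b :: e) = sh true b e.
Proof.
rewrite /nshort card_set_sum /sh /=; apply: eq_bigr => i _.
by case: (nat_of_ord i).
Qed.

Lemma sh_nil s b : sh s b [::] = s.
Proof. by rewrite /sh big_ord_recl big_ord0 /= andbT addn0. Qed.

Lemma sh_cons s b c e : sh s b (c :: e) = ((s && (c != b)) + sh (c != b) c e)%N.
Proof.
rewrite /sh big_ord_recl /=; congr addn.
apply: eq_bigr => i _; rewrite add0n /bump leq0n add1n /=.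
by case: (nat_of_ord i).
Qed.

Fixpoint shorts (b s : bool) (e : seq bool) : nat :=
  match e with
  | [::] => s
  | c :: e' => if c == b then shorts b false e' else (s + shorts c true e')%N
  end.

Lemma sh_shorts e : forall s b, sh s b e = shorts b s e.
Proof.
elim: e => [|c e IH] s b; first by rewrite sh_nil.
rewrite sh_cons /= IH; have [->|H] := eqVneq c b.
  by rewrite /= andbF.
by rewrite /= andbT.
Qed.

Section Weights.
Variables (R : realType) (a r y : R).

Definition PP (b : bool) (e : seq bool) : R :=
  \prod_(i < size e) (if nth false e i == nth false (b :: e) i then a else 1 - a).

Lemma PP_nil b : PP b [::] = 1.
Proof. by rewrite /PP big_ord0. Qed.

Lemma PP_cons b c e : PP b (c :: e) = (if c == b then a else 1 - a) * PP c e.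
Proof. by rewrite /PP /= big_ord_recl. Qed.

Lemma pathprob_cons b e : pathprob a (b :: e) = 2^-1 * PP b e.
Proof.
rewrite /pathprob /PP /= big_add1 /= big_mkord; congr (_ * _).
Qed.

Definition trans (b s c : bool) : R :=
  if c == b then a else (1 - a) * r * (if s then y else 1).

Fixpoint wt (b s : bool) (e : seq bool) : R :=
  match e with
  | [::] => if s then y else 1
  | c :: e' => trans b s c * wt c (c != b) e'
  end.

Lemma wt_eq e : forall b s, wt b s e = PP b e * r ^+ nch b e * y ^+ shorts b s e.
Proof.
elim: e => [|c e IH] b s /=.
  by rewrite PP_nil nch_nil mul1r expr0 mul1r; case: s; rewrite ?expr1 ?expr0.
rewrite IH PP_cons nch_cons /trans.
have [->|H] := eqVneq c b.
  by rewrite /= add0n; ring.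
rewrite /= add1n exprS exprD; case: s; rewrite ?expr1 ?expr0; ring.
Qed.

Lemma weight_cons b e :
  pathprob a (b :: e) * r ^+ nruns (b :: e) * y ^+ nshort (b :: e) = 2^-1 * r * wt b true e.
Proof.
rewrite wt_eq pathprob_cons nruns_cons nshort_sh sh_shorts exprS; ring.
Qed.

End Weights.

Fixpoint fp (h : int) (e : seq bool) : bool :=
  match e with
  | [::] => h == 0
  | c :: e' => (h != 0) && fp (h + step c) e'
  end.

Lemma pos0 e : pos e 0 = 0.
Proof. by rewrite /pos big_ord0. Qed.

Lemma pos_cons b e j : pos (b :: e) j.+1 = step b + pos e j.
Proof. by rewrite /pos big_ord_recl. Qed.

Lemma forall_ordS n (P : 'I_n.+1 -> bool) :
  [forall j, P j] = P ord0 && [forall j : 'I_n, P (lift ord0 j)].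
Proof.
apply/forallP/andP => [H | [H0 H1] j]; first by split => //; apply/forallP => j.
by case: (unliftP ord0 j) => [j' ->|->] //; exact: (forallP H1 j').
Qed.

Lemma fp_pos e : forall h, fp h e =
  (h + pos e (size e) == 0) && [forall j : 'I_(size e), h + pos e j != 0].
Proof.
elim: e => [|c e IH] h /=.
  rewrite pos0 addr0; case: (h == 0) => //=.
  by apply/esym/forallP => -[].
rewrite IH forall_ordS /= pos0 addr0 pos_cons addrA.
rewrite andbA [(h != 0) && _]andbC -andbA; congr andb; congr andb.
by apply: eq_forallb => j; rewrite /= pos_cons addrA.
Qed.

Lemma excursion_cons b e : excursion (b :: e) = fp (step b) e.
Proof.
rewrite /excursion fp_pos /= pos_cons forall_ordS /=.
congr andb; apply: eq_forallb => j; by rewrite /= pos_cons.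
Qed.

Section Tup.
Variable R : realType.

Lemma sum_tupleS n (F : n.+1.-tuple bool -> R) :
  \sum_(t : n.+1.-tuple bool) F t = \sum_(b : bool) \sum_(t : n.-tuple bool) F [tuple of b :: t].
Proof.
rewrite pair_big /=.
rewrite (reindex (fun p : bool * n.-tuple bool => [tuple of p.1 :: p.2])) //=.
exists (fun t => (thead t, [tuple of behead t])) => [[b t] _|t _] /=.
  by congr pair; apply: val_inj.
by rewrite -tuple_eta.
Qed.

Lemma sum_tuple0 (F : 0.-tuple bool -> R) : \sum_(t : 0.-tuple bool) F t = F [tuple].
Proof. by rewrite (big_pred1 [tuple]) // => t; apply/esym/eqP; exact: tuple0. Qed.

End Tup.

Section UU.
Variables (R : realType) (a r y : R).

Fixpoint U (h : int) (b s : bool) (N : nat) (k : bool -> bool -> nat -> R) {struct N} : R :=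
  if h == 0 then k b s N else
  match N with
  | 0%N => 0
  | N'.+1 => \sum_(c : bool) trans a r y b s c * U (h + step c) c (c != b) N' k
  end.

Definition k0 (b s : bool) (M : nat) : R := if M == 0%N then (if s then y else 1) else 0.

Lemma V_U n : forall h b s,
  \sum_(t : n.-tuple bool) (if fp h t then wt a r y b s t else 0) = U h b s n k0.
Proof.
elim: n => [|n IH] h b s.
  rewrite sum_tuple0 /=; by case: (h == 0).
rewrite sum_tupleS /=.
case: (boolP (h == 0)) => [h0|hn0].
  by rewrite big1 // => c _; rewrite big1 // => t _; rewrite /= h0.
apply: eq_bigr => c _; rewrite -IH mulr_sumr; apply: eq_bigr => t _ /=.
by case: fp; rewrite ?mulr0.
Qed.

Lemma Kcoef0 : Kcoef a r y 0 = 0.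
Proof. by rewrite /Kcoef big_pred0 // => t; rewrite /excursion size_tuple. Qed.

Lemma Kcoef_U n : Kcoef a r y n.+1 = 2^-1 * r * \sum_(b : bool) U (step b) b true n k0.
Proof.
rewrite /Kcoef big_mkcond /= sum_tupleS mulr_sumr; apply: eq_bigr => b _.
rewrite -V_U mulr_sumr; apply: eq_bigr => t _ /=.
rewrite excursion_cons weight_cons; by case: fp; rewrite ?mulr0.
Qed.

End UU.

Section UL.
Variables (R : realType) (a r y : R).
Local Notation U := (U a r y).
Local Notation trans := (trans a r y).

Definition delta (b' s' : bool) (b s : bool) (M : nat) : R :=
  if (b == b') && (s == s') && (M == 0%N) then 1 else 0.

Lemma U_lin N : forall h b s k, U h b s N k =
  \sum_(m < N.+1) \sum_(b' : bool) \sum_(s' : bool) U h b s m (delta b' s') * k b' s' (N - m)%N.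
Proof.
elim: N => [|N IH] h b s k.
  rewrite big_ord1 /=; case: (h == 0); last first.
    by rewrite big1 // => b' _; rewrite big1 // => s' _; rewrite mul0r.
  by rewrite !big_bool /delta /=; case: b; case: s => /=; rewrite ?mul1r ?mul0r ?addr0 ?add0r.
rewrite big_ord_recl /=.
case: (boolP (h == 0)) => [h0|hn0].
  rewrite [X in _ + X]big1 ?addr0 => [|i _]; last first.
    by rewrite !big1 // => b' _; rewrite big1 // => s' _; rewrite /delta andbF mul0r.
  by rewrite !big_bool /delta /=; case: b; case: s => /=; rewrite ?mul1r ?mul0r ?addr0 ?add0r.
rewrite [X in _ = X + _]big1 ?add0r; last by move=> b' _; rewrite big1 // => s' _; rewrite mul0r.
under eq_bigr => c _ do rewrite IH mulr_sumr.
rewrite exchange_big /=; apply: eq_bigr => i _.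
have -> : bump 0 i = i.+1 by []. rewrite add0n subSS.
under eq_bigr => c _ do rewrite mulr_sumr.
rewrite exchange_big /=; apply: eq_bigr => b' _.
under eq_bigr => c _ do rewrite mulr_sumr.
rewrite exchange_big /=; apply: eq_bigr => s' _.
rewrite mulr_suml; apply: eq_bigr => c _; ring.
Qed.


Lemma U_ext N h b s k1 k2 :
  (forall b s M, (M <= N)%N -> k1 b s M = k2 b s M) -> U h b s N k1 = U h b s N k2.
Proof.
move=> H; rewrite (U_lin N h b s k1) (U_lin N h b s k2); apply: eq_bigr => m _.
apply: eq_bigr => b' _; apply: eq_bigr => s' _; by rewrite H // leq_subr.
Qed.

Lemma U_mirror N : forall h b s k,
  U (- h) (~~ b) s N (fun b s M => k (~~ b) s M) = U h b s N k.
Proof.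
elim: N => [|N IH] h b s k /=; rewrite oppr_eq0; case: (h == 0); rewrite ?negbK //.
rewrite !big_bool /= addrC; congr (_ * _ + _ * _).
- by case: b.
- rewrite -(IH (h + 1)); congr U; last by case: b.
  by rewrite opprD.
- rewrite -(IH (h - 1)); congr U.
by rewrite opprD opprK.
Qed.


Lemma U_zero N b s k : U 0 b s N k = k b s N.
Proof. by case: N. Qed.

Lemma U_nodown N : forall h b s k, 0 < h -> (forall s M, k false s M = 0) ->
  U h b s N k = 0.
Proof.
elim: N => [|N IH] h b s k hp Hk /=; first by rewrite gt_eqF.
rewrite gt_eqF // big_bool /=.
rewrite IH ?mulr0 ?add0r //; last by rewrite ltr_wpDr.
have [->|hn] := eqVneq (h - 1) 0; first by rewrite U_zero Hk mulr0.
rewrite IH ?mulr0 //.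
by rewrite lt_neqAle eq_sym hn /= subr_ge0; rewrite -gtz0_ge1.
Qed.

Lemma U_dec N : forall h b s k, 0 < h ->
  U (h + 1) b s N k = U 1 b s N (fun b' s' M => U h b' s' M k).
Proof.
elim/ltn_ind: N => N IH h b s k hp.
case: N IH => [|N] IH /=.
  by rewrite gt_eqF // ltr_wpDr.
rewrite gt_eqF ?ltr_wpDr //; apply: eq_bigr => c _; congr (_ * _).
case: c => /=.
  rewrite IH // ?ltr_wpDr // (IH N (ltnSn N) 1) //.
  apply: U_ext => b' s' M HM; rewrite IH //; exact: (leq_ltn_trans HM).
by rewrite addrK subrr !U_zero.
Qed.

End UL.

Section PP.
Variables (R : realType) (a r y : R).
Local Notation U := (U a r y).
Local Notation trans := (trans a r y).
Local Notation delta := (@delta R).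

Definition P b s b' s' m : R := U 1 b s m (delta b' s').

Lemma P0 b s b' s' : P b s b' s' 0 = 0.
Proof. by []. Qed.

Lemma P_upend b s s' m : P b s true s' m = 0.
Proof. by apply: U_nodown => // s0 M; rewrite /delta. Qed.

Lemma P_step b s b' s' m : P b s b' s' m.+1 =
  trans b s false * (if (b' == false) && (s' == b) && (m == 0%N) then 1 else 0)
  + trans b s true * \sum_(s'' : bool) fps_mul (P true (~~ b) false s'') (P false s'' b' s') m.
Proof.
rewrite /P /= big_bool /= addrC; congr (_ + _).
  rewrite U_zero /delta; congr (_ * _); by case: b; case: b'; case: s'.
congr (_ * _).
have -> : (1 + 1 : int) = 1 + 1 by [].
have Hu : forall b s s' m, U 1 b s m (delta true s') = 0 := P_upend.
rewrite U_dec // U_lin /fps_mul.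
transitivity (\sum_(i < m.+1) \sum_(s'' : bool)
   U 1 true (~~b) i (delta false s'') * U 1 false s'' (m - i) (delta b' s')).
  apply: eq_bigr => i _; rewrite big_bool /= big1 ?add0r; last first.
    by move=> s'' _; rewrite Hu mul0r.
  by have -> : (true != b) = ~~ b by case: b.
by rewrite exchange_big.
Qed.


Lemma fps_mul0r (f g : nat -> R) m :
  (forall j, (j <= m)%N -> g j = 0) -> fps_mul f g m = 0.
Proof. by move=> H; rewrite /fps_mul big1 // => i _; rewrite H ?mulr0 // leq_subr. Qed.

Lemma P_downS s m : P false s false true m = 0.
Proof.
elim/ltn_ind: m s => m IH s; case: m IH => [|m] IH //.
rewrite P_step /= mulr0 add0r big1 ?mulr0 // => s'' _.
apply: fps_mul0r => j Hj; apply: IH; exact: (leq_ltn_trans Hj).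
Qed.

Definition qS := P true true false true.
Definition qL := P true true false false.
Definition pS := P true false false true.
Definition pL := P true false false false.
Definition uu := P false true false false.
Definition ww := P false false false false.

Lemma qS_S m : qS m.+1 = if m == 0%N then (1 - a) * r * y else 0.
Proof.
rewrite /qS P_step /= big1 ?mulr0 ?addr0; last by move=> s'' _; apply: fps_mul0r => j _; exact: P_downS.
by rewrite /trans /=; case: (m == 0%N); rewrite ?mulr1 ?mulr0.
Qed.

Lemma pS_S m : pS m.+1 = if m == 0%N then (1 - a) * r else 0.
Proof.
rewrite /pS P_step /= big1 ?mulr0 ?addr0; last by move=> s'' _; apply: fps_mul0r => j _; exact: P_downS.
by rewrite /trans /=; case: (m == 0%N); rewrite ?mulr1 ?mulr0.
Qed.

Lemma qL_S m : qL m.+1 = a * (fps_mul pS uu m + fps_mul pL ww m).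
Proof. by rewrite /qL P_step /= mulr0 add0r big_bool. Qed.

Lemma pL_S m : pL m.+1 = a * (fps_mul pS uu m + fps_mul pL ww m).
Proof. by rewrite /pL P_step /= mulr0 add0r big_bool. Qed.

Lemma uu_S m : uu m.+1 = (if m == 0%N then a else 0) + (1 - a) * r * y * (fps_mul qS uu m + fps_mul qL ww m).
Proof.
rewrite /uu P_step /= big_bool /trans /=; congr (_ + _).
by case: (m == 0%N); rewrite ?mulr1 ?mulr0.
Qed.

Lemma ww_S m : ww m.+1 = (if m == 0%N then a else 0) + (1 - a) * r * (fps_mul qS uu m + fps_mul qL ww m).
Proof.
rewrite /ww P_step /= big_bool /trans /=; congr (_ + _).
  by case: (m == 0%N); rewrite ?mulr1 ?mulr0.
by rewrite mulr1.
Qed.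

Lemma Kcoef_S n : Kcoef a r y n.+1 = r * (y * qS n + qL n).
Proof.
rewrite Kcoef_U big_bool /=.
have -> : U (-1) false true n (k0 y) = U 1 true true n (k0 y) := U_mirror a r y n 1 true true (k0 y).
have HU : U 1 true true n (k0 y) = y * qS n + qL n.
  rewrite U_lin big_ord_recr /= big1 ?add0r; last first.
    move=> i _; rewrite big1 // => b' _; rewrite big1 // => s' _.
    by rewrite /k0 subn_eq0 leqNgt ltn_ord /= mulr0.
  rewrite subnn big_bool /= [X in X + _]big1 ?add0r; last first.
    by move=> s' _; rewrite -/(P true true true s' n) P_upend mul0r.
  rewrite big_bool /= /k0 /= /qS /qL /P; ring.
by rewrite HU; field.
Qed.

End PP.

Section Alg.
Variable R : realType.

Definition trunc (M : nat) (f : nat -> R) : {poly R} := \poly_(i < M) f i.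
Definition eqm (M : nat) (p q : {poly R}) := forall i, (i < M)%N -> p`_i = q`_i.

Lemma eqm_mul M p p' q q' : eqm M p p' -> eqm M q q' -> eqm M (p * q) (p' * q').
Proof.
move=> Hp Hq i Hi; rewrite !coefM; apply: eq_bigr => j _.
have Hj : (j < M)%N by apply: leq_ltn_trans Hi; rewrite -ltnS.
rewrite Hp // Hq //; apply: leq_ltn_trans Hi; exact: leq_subr.
Qed.

Lemma eqm0M M t d : eqm M d 0 -> eqm M (d * t) 0.
Proof. by move=> H; rewrite -(mul0r t); apply: eqm_mul. Qed.

Lemma eqm0D M p q : eqm M p 0 -> eqm M q 0 -> eqm M (p + q) 0.
Proof. by move=> Hp Hq i Hi; rewrite coefD Hp // Hq // coef0 addr0. Qed.

Lemma trunc_mul M f g i : (i < M)%N -> (trunc M f * trunc M g)`_i = fps_mul f g i.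
Proof.
move=> Hi; rewrite coefM /fps_mul; apply: eq_bigr => j _.
rewrite !coef_poly ifT ?ifT //; last first.
  by apply: leq_ltn_trans Hi; rewrite -ltnS.
apply: leq_ltn_trans Hi; exact: leq_subr.
Qed.

Lemma coef_trunc M f i : (i < M)%N -> (trunc M f)`_i = f i.
Proof. by move=> Hi; rewrite coef_poly Hi. Qed.

Lemma coefCX (k : R) i : (k%:P * 'X)`_i = if i == 1%N then k else 0.
Proof. by rewrite coefCM coefX; case: (i == 1%N); rewrite ?mulr1 ?mulr0. Qed.

Lemma coefCXM (k : R) p i : (k%:P * 'X * p)`_i = if i == 0%N then 0 else k * p`_i.-1.
Proof. by rewrite -mulrA coefCM coefXM; case: (i == 0%N); rewrite ?mulr0. Qed.

End Alg.

Section Quad.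
Variables (R : realType) (a r y : R).

Lemma quad M :
  let Gt := 1 - (1 - a)%:P * trunc M (Kcoef a r y) in
  eqm M (Gt ^+ 2 - beta_a a r y * Gt + x_a a r y) 0.
Proof.
move=> Gt; rewrite /Gt.
set QS := trunc M (qS a r y); set QL := trunc M (qL a r y).
set PS := trunc M (pS a r y); set PL := trunc M (pL a r y).
set UU := trunc M (uu a r y); set WW := trunc M (ww a r y).
set Kt := trunc M (Kcoef a r y).
have d1 : eqm M (PS - ((1 - a) * r)%:P * 'X) 0.
  move=> i Hi; rewrite coefB coef_trunc // coefCX coef0.
  case: i Hi => [|m] Hi; first by rewrite subr0; exact: P0.
  rewrite pS_S; case: m Hi => [|m] Hi /=; [exact: subrr | exact: subr0].
have d2 : eqm M (QS - ((1 - a) * r * y)%:P * 'X) 0.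
  move=> i Hi; rewrite coefB coef_trunc // coefCX coef0.
  case: i Hi => [|m] Hi; first by rewrite subr0; exact: P0.
  rewrite qS_S; case: m Hi => [|m] Hi /=; [exact: subrr | exact: subr0].
have d4 : eqm M (PL - a%:P * 'X * (PS * UU + PL * WW)) 0.
  move=> i Hi; rewrite coefB coef_trunc // coefCXM coef0.
  case: i Hi => [|m] Hi; first by rewrite subr0; exact: P0.
  rewrite pL_S coefD !(trunc_mul _ _ (ltnW Hi)); exact: subrr.
have d5 : eqm M (QL - a%:P * 'X * (PS * UU + PL * WW)) 0.
  move=> i Hi; rewrite coefB coef_trunc // coefCXM coef0.
  case: i Hi => [|m] Hi; first by rewrite subr0; exact: P0.
  rewrite qL_S coefD !(trunc_mul _ _ (ltnW Hi)); exact: subrr.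
have d7 : eqm M (UU - (a%:P * 'X + ((1 - a) * r * y)%:P * 'X * (QS * UU + QL * WW))) 0.
  move=> i Hi; rewrite coefB coefD coef_trunc // coefCXM coefCX coef0.
  case: i Hi => [|m] Hi; first by rewrite /= addr0 subr0; exact: P0.
  rewrite uu_S coefD !(trunc_mul _ _ (ltnW Hi)); case: m Hi => [|m] Hi; exact: subrr.
have d8 : eqm M (WW - (a%:P * 'X + ((1 - a) * r)%:P * 'X * (QS * UU + QL * WW))) 0.
  move=> i Hi; rewrite coefB coefD coef_trunc // coefCXM coefCX coef0.
  case: i Hi => [|m] Hi; first by rewrite /= addr0 subr0; exact: P0.
  rewrite ww_S coefD !(trunc_mul _ _ (ltnW Hi)); case: m Hi => [|m] Hi; exact: subrr.
have d9 : eqm M (Kt - r%:P * 'X * (y%:P * QS + QL)) 0.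
  move=> i Hi; rewrite coefB coef_trunc // coefCXM coef0.
  case: i Hi => [|m] Hi; first by rewrite subr0; exact: Kcoef0.
  rewrite Kcoef_S coefD coefCM !(coef_trunc _ (ltnW Hi)); exact: subrr.
pose c := ((1 - a) * r)%:P * 'X.
pose A := a%:P * 'X.
pose yp := y%:P.
pose tau := 1 + c ^+ 2 * yp * (1 - yp).
pose bet := beta_a a r y.
pose Mm := PS * UU + PL * WW.
pose Nn := QS * UU + QL * WW.
pose m0 := Nn * tau + c * A * (1 - yp).
pose w0 := A + c * Nn.
pose J0m := c ^+ 2 * yp ^+ 2 + c * A * Mm.
pose J0m0 := c ^+ 2 * yp ^+ 2 + c * A * m0.
pose D1 := PS - ((1 - a) * r)%:P * 'X.
pose D2 := QS - ((1 - a) * r * y)%:P * 'X.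
pose D4 := PL - a%:P * 'X * (PS * UU + PL * WW).
pose D5 := QL - a%:P * 'X * (PS * UU + PL * WW).
pose D7 := UU - (a%:P * 'X + ((1 - a) * r * y)%:P * 'X * (QS * UU + QL * WW)).
pose D8 := WW - (a%:P * 'X + ((1 - a) * r)%:P * 'X * (QS * UU + QL * WW)).
pose D9 := Kt - r%:P * 'X * (y%:P * QS + QL).
pose e := (1 - a)%:P * D9 + c * yp * D2 + c * D5.
pose F1 := 2%:R * J0m + e - 2%:R + bet.
pose F2 := c * A * (J0m + J0m0 - 2%:R + bet) + c * A * tau * (1 - A * w0).
clearbody QS QL PS PL UU WW Kt.
have E : (1 - (1 - a)%:P * Kt) ^+ 2 - beta_a a r y * (1 - (1 - a)%:P * Kt) + x_a a r y =
   D9 * ((1 - a)%:P * F1) + D2 * (c * yp * F1 - UU * F2) + D5 * (c * F1 - WW * F2)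
   + D7 * (c * (1 - yp) * F2 - c * A * tau * c) + D1 * (UU * F2 - c * A * tau * UU)
   + D4 * (WW * F2 - c * A * tau * WW) + D8 * (- (c * A * tau * A * Mm)).
  rewrite /F1 /F2 /e /J0m /J0m0 /w0 /m0 /Nn /Mm /bet /tau /yp /A /c /D1 /D2 /D4 /D5 /D7 /D8 /D9.
  rewrite /beta_a /x_a /tau_a.
  rewrite !(polyCM, polyCB, polyC_exp, polyC1).
  ring.
rewrite E; repeat apply: eqm0D; apply: eqm0M; assumption.
Qed.

End Quad.

Section Part1.
Variable R : realType.

Lemma fps_sqS (f : nat -> R) k :
  fps_mul f f k.+1 = 2 * (f 0%N * f k.+1) + \sum_(j < k) f j.+1 * f (k - j)%N.
Proof.
rewrite /fps_mul big_ord_recl big_ord_recr /= subn0 subnn.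
under eq_bigr => j _ do rewrite /bump /= add1n subSS.
rewrite (mulrC (f k.+1)); ring.
Qed.

Lemma fps_sq_uniq (f g : nat -> R) : f 0%N = 1 -> g 0%N = 1 ->
  (forall n, fps_mul f f n = fps_mul g g n) -> forall n, f n = g n.
Proof.
move=> f0 g0 H n; elim/ltn_ind: n => n IH.
case: n IH => [|k] IH; first by rewrite f0 g0.
have := H k.+1; rewrite !fps_sqS f0 g0.
have -> : \sum_(j < k) f j.+1 * f (k - j)%N = \sum_(j < k) g j.+1 * g (k - j)%N.
  apply: eq_bigr => j _; rewrite !IH //.
    by rewrite ltnS leq_subr.
  by rewrite ltnS.
move=> E; lra.
Qed.

Lemma beta0 (a r y : R) : (beta_a a r y)`_0 = 1.
Proof. by rewrite /beta_a coefD coef1 coefXnM /= addr0. Qed.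

Lemma part1 (a r y : R) : 0 < a < 1 ->
  forall alpha : nat -> R,
      alpha 0%N = 1 ->
      (forall n, fps_mul alpha alpha n = (disc_a a r y)`_n) ->
      forall n, Kcoef a r y n =
        (((1 : {poly R}) - 2^-1 *: beta_a a r y)`_n - 2^-1 * alpha n) / (1 - a).
Proof.
move=> /andP [a0 a1] alpha al0 Hal.
pose Gs n := (n == 0%N)%:R - (1 - a) * Kcoef a r y n.
pose al n := 2 * Gs n - (beta_a a r y)`_n.
have Hal' : forall n, fps_mul al al n = (disc_a a r y)`_n.
  move=> n.
  pose Gt := 1 - (1 - a)%:P * trunc n.+1 (Kcoef a r y).
  have Htr : eqm n.+1 (trunc n.+1 al) (2%:R * Gt - beta_a a r y).
    move=> i Hi; rewrite coef_trunc // coefB mulr_natl coefMn coefB coef1 coefCM.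
    by rewrite coef_trunc // /al /Gs mulr_natl.
  rewrite -(trunc_mul _ _ (ltnSn n)) (eqm_mul Htr Htr) //.
  have -> : (2%:R * Gt - beta_a a r y) * (2%:R * Gt - beta_a a r y) =
     4%:R * (Gt ^+ 2 - beta_a a r y * Gt + x_a a r y) + disc_a a r y.
    rewrite /disc_a scaler_nat -mulr_natl; ring.
  by rewrite coefD mulr_natl coefMn (quad a r y (ltnSn n)) coef0 mul0rn add0r.
have al0' : al 0%N = 1.
  by rewrite /al /Gs Kcoef0 beta0 /=; ring.
have Heq : forall n, alpha n = al n.
  apply: fps_sq_uniq => // n; by rewrite Hal Hal'.
move=> n; rewrite Heq /al /Gs coefB coef1 coefZ.
have a1' : 1 - a != 0 by rewrite subr_eq0 eq_sym lt_eqF.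
field.
by [].
Qed.

End Part1.

Lemma pos_le e j : (absz (pos e j) <= j)%N.
Proof.
elim: j => [|j IH]; first by rewrite pos0.
rewrite /pos big_ord_recr /= -/(pos e j).
rewrite -lez_nat abszE (le_trans (ler_normD _ _)) //.
have -> : `|step (nth false e j)| = 1 by case: (nth false e j).
by rewrite -addn1 PoszD lerD2r -abszE lez_nat.
Qed.

Lemma heightle_small e N : (size e <= N)%N -> heightle e N.
Proof.
move=> H; apply/forallP => j; apply/implyP => _.
apply: leq_trans (pos_le e j) _; apply: leq_trans H; by rewrite -ltnS.
Qed.

Lemma aux1 (R : realType) (a : R) : 0 <= a -> a <= 1 -> forall u v : R, 0 <= u -> u <= 1 -> 0 <= v -> v <= 1 ->
    0 <= a * u + (1 - a) * v <= 1.
Proof. move=> a0 a1 u v H1 H2 H3 H4; apply/andP; split; nra. Qed.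
Lemma aux2 (R : realType) (a : R) : 0 <= a -> a <= 1 -> forall u v : R, 0 <= u -> u <= 1 -> 0 <= v -> v <= 1 ->
    0 <= (1 - a) * u + a * v <= 1.
Proof. move=> a0 a1 u v H1 H2 H3 H4; apply/andP; split; nra. Qed.

Section Bnd.
Variables (R : realType) (a : R).
Hypothesis (a0 : 0 <= a) (a1 : a <= 1).

Lemma U_bnd N : forall h b s k, (forall b s M, 0 <= k b s M <= 1) ->
  0 <= U a 1 1 h b s N k <= 1.
Proof.
elim: N => [|N IH] h b s k Hk /=; case: (h == 0) => //; rewrite ?lexx ?ler01 //.
rewrite big_bool /trans.
have /andP [u1 u2] := IH (h + step true) true (true != b) k Hk.
have /andP [v1 v2] := IH (h + step false) false (false != b) k Hk.
have aux := aux1 a0 a1; have aux2 := aux2 a0 a1.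
move: u1 u2 v1 v2; case: b; case: s => /= u1 u2 v1 v2; rewrite ?mulr1; auto.
Qed.

Lemma delta_bnd b' s' : forall b s M, 0 <= delta R b' s' b s M <= 1.
Proof. by move=> b s M; rewrite /delta; case: ifP; rewrite ?lexx ?ler01. Qed.

Lemma P_ge0 b s b' s' m : 0 <= P a 1 1 b s b' s' m.
Proof. by have /andP [] := U_bnd m 1 b s (delta_bnd b' s'). Qed.

Lemma pK_S n : Kcoef a 1 1 n.+1 = qS a 1 1 n + qL a 1 1 n.
Proof. by rewrite Kcoef_S !mul1r. Qed.

Lemma pK_ge0 n : 0 <= Kcoef a 1 1 n.
Proof.
case: n => [|n]; first by rewrite Kcoef0.
by rewrite pK_S addr_ge0 // P_ge0.
Qed.

Lemma pK_sum_le1 m : \sum_(n < m) Kcoef a 1 1 n <= 1.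
Proof.
have H : \sum_(n < m.+2) Kcoef a 1 1 n <= 1.
  rewrite big_ord_recl Kcoef0 add0r.
  have Hk1 : forall (b s : bool) (M : nat), 0 <= (fun _ _ _ => 1 : R) b s M <= 1.
    by move=> *; rewrite ler01 lexx.
  have /andP [_ H] := U_bnd m 1 true true Hk1.
  apply: le_trans H; rewrite U_lin le_eqVlt; apply/orP; left; apply/eqP.
  apply: eq_bigr => i _; rewrite lift0 pK_S big_bool /= [X in _ = X + _]big1 ?add0r; last first.
    by move=> s' _; rewrite -/(P a 1 1 true true true s' i) P_upend mul0r.
  by rewrite big_bool /= !mulr1.
apply: le_trans H; rewrite !big_ord_recr /= -addrA lerDl addr_ge0 //; exact: pK_ge0.
Qed.

End Bnd.

Section Key.
Variables (R : realType) (a : R).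

Lemma quad1 N : a != 1 ->
  let Pt := trunc N (Kcoef a 1 1) in
  eqm N ((1 - a)%:P * (Pt * Pt) - Pt + (2 * a - 1)%:P * ('X^2 * Pt) + (1 - a)%:P * 'X^2) 0.
Proof.
move=> an1 Pt i Hi.
set Q := (1 - a)%:P * (Pt * Pt) - Pt + (2 * a - 1)%:P * ('X^2 * Pt) + (1 - a)%:P * 'X^2.
have H : eqm N ((1 - (1 - a)%:P * Pt) ^+ 2 - beta_a a 1 1 * (1 - (1 - a)%:P * Pt) + x_a a 1 1) 0
  := fun j Hj => @quad R a 1 1 N j Hj.
have E : (1 - (1 - a)%:P * Pt) ^+ 2 - beta_a a 1 1 * (1 - (1 - a)%:P * Pt) + x_a a 1 1
    = (1 - a)%:P * Q.
  rewrite /Q /beta_a /x_a /tau_a !(polyCM, polyCB, polyC_exp, polyC1, polyCD); ring.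
move: (H i Hi); rewrite E coefCM coef0 => /eqP; rewrite mulf_eq0 subr_eq0 eq_sym (negbTE an1) /=.
by move=> /eqP ->.
Qed.


Definition Ssum (M : nat) : R := \sum_(n < M) Kcoef a 1 1 n.

Lemma sum_coef_trunc N : \sum_(i < N) (trunc N (Kcoef a 1 1))`_i = Ssum N.
Proof. by apply: eq_bigr => i _; rewrite coef_trunc. Qed.

Lemma key_sum M : a != 1 ->
  let N := (2 * M + 1).+2 in
  let Pt := trunc N (Kcoef a 1 1) in
  (1 - a) * \sum_(i < N) (Pt * Pt)`_i - Ssum N + (2 * a - 1) * Ssum (2 * M + 1) + (1 - a) = 0.
Proof.
move=> an1 N Pt.
have H : eqm N ((1 - a)%:P * (Pt * Pt) - Pt + (2 * a - 1)%:P * ('X^2 * Pt)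
      + (1 - a)%:P * 'X^2) 0 := @quad1 N an1.
have E0 : \sum_(i < N) ((1 - a)%:P * (Pt * Pt) - Pt + (2 * a - 1)%:P * ('X^2 * Pt)
      + (1 - a)%:P * 'X^2)`_i = 0.
  by apply: big1 => i _; rewrite H // coef0.
have E1 : \sum_(i < N) ((1 - a)%:P * (Pt * Pt) - Pt + (2 * a - 1)%:P * ('X^2 * Pt)
      + (1 - a)%:P * 'X^2)`_i = (1 - a) * \sum_(i < N) (Pt * Pt)`_i - \sum_(i < N) Pt`_i
      + (2 * a - 1) * \sum_(i < N) ('X^2 * Pt)`_i + (1 - a) * \sum_(i < N) ('X^2 : {poly R})`_i.
  rewrite !mulr_sumr -sumrN -!big_split; apply: eq_bigr => i _.
  by rewrite !coefD coefN !coefCM.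
rewrite E1 in E0; rewrite -[RHS]E0 sum_coef_trunc.
have -> : \sum_(i < N) ('X^2 * Pt)`_i = Ssum (2 * M + 1).
  rewrite /N !big_ord_recl /= !coefXnM /= add0r add0r /Ssum.
  apply: eq_bigr => i _; rewrite coefXnM /= subn2 /= coef_trunc //.
  by rewrite add0n /N (leq_trans (ltn_ord i)) // ltnW.
have -> : \sum_(i < N) ('X^2 : {poly R})`_i = 1.
  rewrite /N !big_ord_recl /= !coefXn /= add0r add0r addn1 big_ord_recl /= coefXn /=.
  by rewrite big1 ?addr0 // => i _; rewrite coefXn.
by rewrite mulr1.
Qed.

End Key.

Lemma sq_le_sum (R : realType) (a : R) M N : 0 <= a -> a <= 1 -> (2 * M <= N)%N ->
  Ssum a M ^+ 2 <= \sum_(i < N) (trunc N (Kcoef a 1 1) * trunc N (Kcoef a 1 1))`_i.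
Proof.
move=> a0 a1 HMN.
pose Pm := trunc M (Kcoef a 1 1); pose Pt := trunc N (Kcoef a 1 1).
have Hb : forall k, 0 <= Pm`_k /\ Pm`_k <= Pt`_k.
  move=> k; rewrite /Pm /Pt /trunc !coef_poly.
  case: (ltnP k M) => HkM.
    have HkN : (k < N)%N.
      apply: leq_trans HMN; apply: leq_trans HkM _; rewrite mul2n -addnn; exact: leq_addr.
    by rewrite HkN lexx pK_ge0.
  by rewrite lexx; case: (k < N)%N; rewrite ?lexx ?pK_ge0.
have HS : Ssum a M = Pm.[1].
  rewrite (horner_coef_wide 1 (size_poly M _)); apply: eq_bigr => i _.
  by rewrite expr1n mulr1 coef_trunc.
rewrite HS expr2 -hornerM (@horner_coef_wide _ N).
  apply: ler_sum => i _; rewrite expr1n mulr1 !coefM; apply: ler_sum => j _.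
  have [h1 h2] := Hb j; have [h3 h4] := Hb (i - j)%N.
  exact: ler_pM.
apply: leq_trans (size_polyMleq _ _) _.
have Hs : (size Pm <= M)%N := size_poly M _.
apply: leq_trans HMN; rewrite mul2n -addnn; apply: leq_trans (leq_pred _) _.
exact: leq_add.
Qed.

Lemma key_ineq (R : realType) (a : R) M : 0 < a -> a < 1 ->
  (1 - a) * Ssum a M ^+ 2 <= Ssum a (2 * M + 1).+2 - (2 * a - 1) * Ssum a (2 * M + 1) - (1 - a).
Proof.
move=> a0 a1.
have an1 : a != 1 by rewrite lt_eqF.
have E := key_sum M an1; simpl in E.
have HMN : (2 * M <= (2 * M + 1).+2)%N by rewrite addn1 ltnW // ltnW.
have H' := @sq_le_sum R a M (2 * M + 1).+2 (ltW a0) (ltW a1) HMN.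
set T := \sum_(i < _) _ in E H'.
set S1 := Ssum a M in H' *.
nra.
Qed.

Local Open Scope classical_set_scope.
Local Open Scope ring_scope.

Lemma Ssum_nd (R : realType) (a : R) : 0 <= a -> a <= 1 -> nondecreasing_seq (Ssum a).
Proof.
move=> a0 a1; apply/nondecreasing_seqP => n; rewrite /Ssum big_ord_recr /= lerDl.
exact: pK_ge0.
Qed.

Lemma Ssum_cvg1 (R : realType) (a : R) : 0 < a -> a < 1 -> Ssum a @ \oo --> (1 : R).
Proof.
move=> a0 a1.
have nd := Ssum_nd (ltW a0) (ltW a1).
have ub : has_ubound (range (Ssum a)).
  by exists 1 => _ [n _ <-]; exact: pK_sum_le1 (ltW a0) (ltW a1) n.
have cS : cvgn (Ssum a) := nondecreasing_is_cvgn nd ub.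
set l := limn (Ssum a) in cS.
have Sle : forall M, Ssum a M <= l := nondecreasing_cvgn_le nd cS.
have ineq : forall M, (1 - a) * Ssum a M ^+ 2 <=
    2 * (1 - a) * l + `|2 * a - 1| * (l - Ssum a M) - (1 - a).
  move=> M; have K := key_ineq M a0 a1.
  have h1 := Sle (2 * M + 1).+2.
  have h2 : Ssum a (2 * M + 1) <= Ssum a (2 * M + 1).+2 by apply: nd; rewrite ltnW.
  have h3 : Ssum a M <= Ssum a (2 * M + 1).
    apply: nd; rewrite addn1 mul2n -addnn; apply: leq_trans (leq_addr M M) (leqnSn _).
  have h4 := ler_norm (2 * a - 1); have h5 := normr_ge0 (2 * a - 1).
  move: K h1 h2 h3 h4 h5.
  set A := Ssum a (2 * M + 1).+2; set B := Ssum a (2 * M + 1); set C := Ssum a M.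
  set D := `|2 * a - 1|.
  move=> *; nra.
have lim1 : (fun M => (1 - a) * Ssum a M ^+ 2) @ \oo --> (1 - a) * l ^+ 2.
  apply: cvgMr; rewrite expr2.
  under eq_fun do rewrite expr2.
  exact: cvgM.
have lim2 : (fun M => 2 * (1 - a) * l + `|2 * a - 1| * (l - Ssum a M) - (1 - a)) @ \oo -->
    2 * (1 - a) * l + `|2 * a - 1| * (l - l) - (1 - a).
  apply: cvgB; last exact: cvg_cst.
  apply: cvgD; first exact: cvg_cst.
  apply: cvgMr; apply: cvgB; [exact: cvg_cst | exact: cS].
have H : (1 - a) * l ^+ 2 <= 2 * (1 - a) * l + `|2 * a - 1| * (l - l) - (1 - a).
  apply: (ler_cvg_to lim1 lim2); apply: filterE => M; exact: ineq.
rewrite subrr mulr0 addr0 in H.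
have H2 : (l - 1) ^+ 2 <= 0.
  move: H; set L := l; move=> H; nra.
have -> : 1 = l.
  have : (l - 1) ^+ 2 == 0 by rewrite eq_le H2 sqr_ge0.
  by rewrite sqrf_eq0 subr_eq0 => /eqP ->.
exact: cS.
Qed.

Lemma pathprob_ge0 (R : realType) (a : R) e : 0 <= a -> a <= 1 -> 0 <= pathprob a e.
Proof.
move=> a0 a1; rewrite /pathprob mulr_ge0 ?invr_ge0 ?ler0n //.
apply: prodr_ge0 => i _; case: ifP => _ //; by rewrite subr_ge0.
Qed.

Lemma Kcoef11 (R : realType) (a : R) n :
  Kcoef a 1 1 n = \sum_(e : n.-tuple bool | excursion e) pathprob a e.
Proof. by apply: eq_bigr => e _; rewrite !expr1n !mulr1. Qed.

Lemma KH_eq (R : realType) (a r y : R) N n : (n <= N)%N -> KHcoef a r y N n = Kcoef a r y n.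
Proof.
move=> HnN; apply: eq_bigl => e; rewrite heightle_small ?andbT //.
by rewrite size_tuple.
Qed.

Lemma pLH_eq (R : realType) (a : R) N n : (n <= N)%N -> pLH a N n = Kcoef a 1 1 n.
Proof.
move=> HnN; rewrite Kcoef11; apply: eq_bigl => e; rewrite heightle_small ?andbT //.
by rewrite size_tuple.
Qed.

Lemma pLH_bnd (R : realType) (a : R) N n : 0 <= a -> a <= 1 ->
  0 <= pLH a N n <= Kcoef a 1 1 n.
Proof.
move=> a0 a1; rewrite Kcoef11; apply/andP; split.
  by apply: sumr_ge0 => e _; exact: pathprob_ge0.
rewrite /pLH [X in _ <= X]big_mkcond [X in X <= _]big_mkcond /=.
apply: ler_sum => e _; case: (excursion e) => //=; case: heightle => //.
exact: pathprob_ge0.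
Qed.

Lemma pH_bnd (R : realType) (a : R) N : 0 < a -> a < 1 ->
  Ssum a N <= pH a N <= 1.
Proof.
move=> a0 a1.
pose T m := \sum_(k < m) pLH a N k.
have Tnd : nondecreasing_seq T.
  apply/nondecreasing_seqP => m; rewrite /T big_ord_recr /= lerDl.
  by have /andP [] := pLH_bnd N m (ltW a0) (ltW a1).
have Tle : forall m, T m <= Ssum a m.
  move=> m; apply: ler_sum => k _.
  by have /andP [] := pLH_bnd N k (ltW a0) (ltW a1).
have Tub : has_ubound (range T).
  exists 1 => _ [m _ <-]; apply: le_trans (Tle m) _; exact: pK_sum_le1 (ltW a0) (ltW a1) m.
have cT : cvgn T := nondecreasing_is_cvgn Tnd Tub.
have -> : pH a N = limn T by [].
apply/andP; split.
  apply: le_trans (nondecreasing_cvgn_le Tnd cT N.+1).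
  rewrite /T big_ord_recr /=.
  have -> : Ssum a N = \sum_(k < N) pLH a N k.
    by apply: eq_bigr => k _; rewrite pLH_eq // ltnW.
  rewrite lerDl; by have /andP [] := pLH_bnd N N (ltW a0) (ltW a1).
apply: (cvgr_to_le cT); apply: filterE => m.
apply: le_trans (Tle m) _; exact: pK_sum_le1 (ltW a0) (ltW a1) m.
Qed.

Lemma pH_cvg1 (R : realType) (a : R) : 0 < a -> a < 1 -> pH a @ \oo --> (1 : R).
Proof.
move=> a0 a1.
apply: (@squeeze_cvgr _ _ _ _ (Ssum a) (fun _ => 1)).
- apply: filterE => N; exact: pH_bnd.
- exact: Ssum_cvg1.
- exact: cvg_cst.
Qed.

Lemma part2 (R : realType) (a r y : R) : 0 < a < 1 ->
  forall n, (fun N : nat => KHcoef a r y N n / pH a N) @ \oo --> Kcoef a r y n.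
Proof.
move=> /andP [a0 a1] n.
have H1 : (fun N : nat => Kcoef a r y n / pH a N) @ \oo --> Kcoef a r y n / (1 : R).
  apply: cvgMr; apply: cvgV; first exact: oner_neq0.
  exact: pH_cvg1.
rewrite divr1 in H1.
apply: cvg_trans H1; apply: near_eq_cvg.
near=> N; rewrite KH_eq //; near: N; exact: nbhs_infty_ge.
Unshelve. all: by end_near.
Qed.

Unset Implicit Arguments.

Theorem corollary3 (R : realType) (a r y : R) :
  0 < a < 1 ->
  (forall alpha : nat -> R,
      alpha 0%N = 1 ->
      (forall n, fps_mul alpha alpha n = (disc_a a r y)`_n) ->
      forall n, Kcoef a r y n =
        (((1 : {poly R}) - 2^-1 *: beta_a a r y)`_n - 2^-1 * alpha n) / (1 - a))
  /\
  (forall n, (fun N : nat => KHcoef a r y N n / pH a N) @ \oo --> Kcoef a r y n).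
Proof.
move=> Ha; split; [exact: part1 | exact: part2].
Qed.
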